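(* Let $n\ge 1$ and let $\mathbb{X}:=\{x\in[0,1]^n \mid \sum_{i=1}^n x_i=1\}$ be the standard simplex. For $p\in\mathbb{R}^n$ let $\mathscr{M}(p):=\arg\max_{x\in\mathbb{X}} p^\top x$. Fix any $q\in\mathbb{R}^n$ and any $\bar{x}\in\mathscr{M}(q)$. Then the only vector $x\in\mathbb{X}$ satisfying $$x\in\mathscr{M}(\bar{x}-x+q)$$ is $x=\bar{x}$.
   Context: $\mathscr{M}:\mathbb{R}^n\to 2^{\mathbb{X}}$ is the best response map, i.e. $\mathscr{M}(p)$ is the set of maximizers of the linear function $x\mapsto p^\top x$ over the simplex $\mathbb{X}$. *)

(* Defs.v *)
From mathcomp Require Import all_boot all_order all_algebra.
Set Implicit Arguments. Unset Strict Implicit. Unset Printing Implicit Defensive.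
Import Order.TTheory GRing.Theory Num.Theory.
Local Open Scope ring_scope.

Definition dotv (R : realFieldType) (n : nat) (p x : 'cV[R]_n) : R :=
  \sum_(i < n) p i 0 * x i 0.

Definition simplex (R : realFieldType) (n : nat) (x : 'cV[R]_n) : Prop :=
  (forall i, 0 <= x i 0 <= 1) /\ \sum_(i < n) x i 0 = 1.

Definition best_response (R : realFieldType) (n : nat) (p x : 'cV[R]_n) : Prop :=
  simplex x /\ forall y, simplex y -> dotv p y <= dotv p x.

(* Main.v *)
Require Import Defs.
From mathcomp Require Import all_boot all_order all_algebra.
From mathcomp Require Import ring.
Import Order.TTheory GRing.Theory Num.Theory.
Local Open Scope ring_scope.

Theorem lemma1 (R : realFieldType) (n : nat) (hn : (1 <= n)%N)
  (q xbar : 'cV[R]_n) (hxbar : best_response q xbar) (x : 'cV[R]_n) :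
  simplex x -> best_response (xbar - x + q) x -> x = xbar.
Proof.
move=> sx [_ hx]; case: hxbar => sxb hq.
have h1 := hx _ sxb.
have h2 := hq _ sx.
move: h1 h2; rewrite /dotv => h1 h2.
have key : \sum_(i < n) (xbar i 0 - x i 0) ^+ 2 <= 0.
  have -> : \sum_(i < n) (xbar i 0 - x i 0) ^+ 2 =
     (\sum_(i < n) (xbar - x + q) i 0 * xbar i 0 - \sum_(i < n) (xbar - x + q) i 0 * x i 0)
     - (\sum_(i < n) q i 0 * xbar i 0 - \sum_(i < n) q i 0 * x i 0).
    rewrite -[X in _ = X - _]sumrB -[X in _ = _ - X]sumrB -sumrB; apply: eq_bigr => i _; rewrite !mxE; ring.
  rewrite subr_le0; apply: le_trans (_ : 0 <= _); first by rewrite subr_le0.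
  by rewrite subr_ge0.
have H0 : \sum_(i < n) (xbar i 0 - x i 0) ^+ 2 = 0.
  by apply/eqP; rewrite eq_le key sumr_ge0 // => i _; rewrite sqr_ge0.
apply/matrixP => i j; rewrite (ord1 j).
have := (@psumr_eq0P R _ predT (fun k => (xbar k 0 - x k 0) ^+ 2) (fun k _ => sqr_ge0 (xbar k 0 - x k 0)) H0 i isT).
by move/eqP; rewrite sqrf_eq0 subr_eq0 => /eqP.
Qed.
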